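(* Let $E\subset\Delta_n$ be a finite set and suppose the market weight sequence $\{\mu(t)\}_{t\ge0}$ takes values in $E$. Let $\Theta=(\overline{\Delta}_n)^E$ be the set of all portfolio maps $\pi:E\to\overline{\Delta}_n$, with the topology of uniform (equivalently pointwise) convergence. Suppose the empirical measures $\mathbb P_t$ converge weakly to a probability measure $\mathbb P$ on $E\times E$. Then for each $\pi\in\Theta$ the limit $W(\pi)=\lim_{t\to\infty}\frac1t\log V_\pi(t)$ exists and equals $\int_{E\times E}\ell_\pi\,d\mathbb P$. Moreover there exists $\pi^*\in\Theta$ with $W(\pi^* )=W^*:=\max_{\pi\in\Theta}W(\pi)$, and writing $\mathbb P(p,q)=\mathbb P_1(p)\mathbb P_2(q\mid p)$ with $\mathbb P_1$ the first marginal and $\mathbb P_2$ the conditional distribution, such a $\pi^*$ satisfies $\pi^*(p)\in\operatorname{argmax}_{x\in\overline{\Delta}_n}\int_E\log\left(x\cdot\frac{q}{p}\right)\mathbb P_2(dq\mid p)$ for every $p$ with $\mathbb P_1(p)>0$.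
   Context: $\Delta_n=\{p\in(0,1)^n:\sum_ip_i=1\}$, $\overline{\Delta}_n$ its closure in the hyperplane $\sum_ip_i=1$ ($n\ge2$). For a portfolio map $\pi$, the relative value is $V_\pi(0)=1$, $V_\pi(t+1)=V_\pi(t)\,\pi(\mu(t))\cdot\frac{\mu(t+1)}{\mu(t)}$, where $a\cdot b$ is the Euclidean inner product and $a/b$ the componentwise ratio. $\ell_\pi(p,q)=\log\left(\pi(p)\cdot\frac qp\right)$, and $\mathbb P_t=\frac1t\sum_{s=0}^{t-1}\delta_{(\mu(s),\mu(s+1))}$. *)

(* Defs.v *)
From HB Require Import structures.
From mathcomp Require Import all_boot all_order all_algebra.
From mathcomp Require Import all_classical all_reals all_analysis.
Set Implicit Arguments. Unset Strict Implicit. Unset Printing Implicit Defensive.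
Import Order.TTheory GRing.Theory Num.Theory.
Import numFieldNormedType.Exports.
Local Open Scope ring_scope.

Section Defs.
Variables (R : realType) (n : nat).
Notation vec := 'rV[R]_n.

Definition open_simplex (p : vec) : Prop :=
  (forall i, 0 < p ord0 i) /\ \sum_(i < n) p ord0 i = 1.

Definition closed_simplex (x : vec) : Prop :=
  (forall i, 0 <= x ord0 i) /\ \sum_(i < n) x ord0 i = 1.

Definition dot_ratio (x p q : vec) : R := \sum_(i < n) x ord0 i * (q ord0 i / p ord0 i).

Fixpoint relval (pi : vec -> vec) (mu : nat -> vec) (t : nat) : R :=
  match t with
  | 0 => 1
  | s.+1 => relval pi mu s * dot_ratio (pi (mu s)) (mu s) (mu s.+1)
  end.

Definition ell (pi : vec -> vec) (p q : vec) : R := ln (dot_ratio (pi p) p q).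

(* integral of f against the empirical measure P_t *)
Definition emp_int (mu : nat -> vec) (t : nat) (f : vec -> vec -> R) : R :=
  t%:R^-1 * \sum_(s < t) f (mu s) (mu s.+1).

(* integral of f against a measure P on E x E given by its masses *)
Definition disc_int (E : seq vec) (P : vec -> vec -> R) (f : vec -> vec -> R) : R :=
  \sum_(p <- E) \sum_(q <- E) P p q * f p q.

Definition growth (pi : vec -> vec) (mu : nat -> vec) : R :=
  limn (fun t : nat => t%:R^-1 * ln (relval pi mu t)).

Definition marg1 (E : seq vec) (P : vec -> vec -> R) (p : vec) : R :=
  \sum_(q <- E) P p q.
Definition cond2 (E : seq vec) (P : vec -> vec -> R) (q p : vec) : R :=
  P p q / marg1 E P p.

End Defs.

(* Main.v *)
Require Import Defs.
From HB Require Import structures.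
From mathcomp Require Import all_boot all_order all_algebra.
From mathcomp Require Import all_classical all_reals all_analysis.
Import Order.TTheory GRing.Theory Num.Theory.
Import numFieldNormedType.Exports.
Local Open Scope classical_set_scope.
Local Open Scope ring_scope.

Section H.
Variables (R : realType) (n : nat).
Notation vec := 'rV[R]_n.

Lemma dot_ratio_gt0 (x p q : vec) : closed_simplex x -> open_simplex p -> open_simplex q ->
  0 < dot_ratio x p q.
Proof.
move=> [x0 x1] [p0 _] [q0 _].
have t0 : forall i : 'I_n, 0 <= x ord0 i * (q ord0 i / p ord0 i).
  by move=> i; rewrite mulr_ge0 // divr_ge0 // ltW.
rewrite lt_def sumr_ge0 ?andbT //; apply/eqP => /psumr_eq0P H.
have : \sum_(i < n) x ord0 i = 0.
  apply: big1 => i _; have := H (fun j _ => t0 j) i isT; move/eqP; rewrite mulf_eq0 => /orP[/eqP //|].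
  by rewrite mulf_eq0 invr_eq0 (gt_eqF (q0 i)) (gt_eqF (p0 i)).
by rewrite x1 => /eqP; rewrite oner_eq0.
Qed.
Lemma cont_sum_seq (T : topologicalType) (I : Type) (r : seq I) (F : I -> T -> R) x :
  (forall i, {for x, continuous (F i)}) -> {for x, continuous (fun y => \sum_(i <- r) F i y)}.
Proof.
move=> H; elim: r => [|a r IH].
  have -> : (fun y => \sum_(i <- [::]) F i y) = fun=> 0 by apply/funext => y; rewrite big_nil.
  exact: cst_continuous.
have -> : (fun y => \sum_(i <- a :: r) F i y) = F a + (fun y => \sum_(i <- r) F i y).
  by apply/funext => y; rewrite big_cons.
exact: (continuousD (H a) IH).
Qed.
Lemma dot_ratio_cont (p q : vec) x : {for x, continuous (fun y => dot_ratio y p q)}.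
Proof.
rewrite /dot_ratio; apply: cont_sum_seq => i.
apply: continuousM; first exact: coord_continuous.
exact: cst_continuous.
Qed.
Lemma closed_simplex_closed : closed (closed_simplex (R:=R) (n:=n)).
Proof.
have -> : closed_simplex (R:=R) (n:=n) =
   (\bigcap_(i in setT) [set x : vec | 0 <= x ord0 i]) `&` [set x : vec | \sum_(i < n) x ord0 i = 1].
  apply/seteqP; split => x /=; first by move=> [a b]; split => // i _; exact: a.
  by move=> [a b]; split => // i; exact: a.
apply: closedI.
  apply: closed_bigI => i _.
  have := (@preimage_closed _ _ (fun x : vec => x ord0 i) [set y : R | 0 <= y] (fun y _ => @coord_continuous R 1 n ord0 i y) (@closed_ge R 0)).
  apply.
have := (@preimage_closed _ _ (fun x : vec => \sum_(i < n) x ord0 i) [set y : R | y = 1] _ (@closed_eq R 1)).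
apply => y _; apply: cont_sum_seq => i; exact: coord_continuous.
Qed.
Lemma closed_simplex_compact : compact (closed_simplex (R:=R) (n:=n)).
Proof.
have Mnco : compact [set v : vec | forall i, v ord0 i \in `[0, 1]].
  apply: (@rV_compact R n (fun=> `[(0:R), 1]%classic)).
  by move=> _; apply: segment_compact.
apply: (subclosed_compact closed_simplex_closed Mnco).
move=> x [x0 x1] i /=; rewrite in_itv /= x0 /= -x1.
by rewrite (bigD1 i) //= lerDl sumr_ge0.
Qed.
Lemma cont_sum_seq_in (T : topologicalType) (r : seq vec) (F : vec -> T -> R) x :
  (forall i, i \in r -> {for x, continuous (F i)}) ->
  {for x, continuous (fun y => \sum_(i <- r) F i y)}.
Proof.
elim: r => [|a r IH] H.
  have -> : (fun y => \sum_(i <- [::]) F i y) = fun=> 0 by apply/funext => y; rewrite big_nil.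
  exact: cst_continuous.
have -> : (fun y => \sum_(i <- a :: r) F i y) = F a + (fun y => \sum_(i <- r) F i y).
  by apply/funext => y; rewrite big_cons.
apply: continuousD; first by apply: H; rewrite inE eqxx.
by apply: IH => i ir; apply: H; rewrite inE ir orbT.
Qed.
Lemma F_cont (E : seq vec) (P : vec -> vec -> R) p x :
  open_simplex p -> (forall q, q \in E -> open_simplex q) -> closed_simplex x ->
  {for x, continuous (fun y => \sum_(q <- E) P p q * ln (dot_ratio y p q))}.
Proof.
move=> Hp HE Hx; apply: cont_sum_seq_in => q qE.
apply: continuousM; first exact: cst_continuous.
have h := (continuous_comp (dot_ratio_cont p q x) (continuous_ln (@dot_ratio_gt0 x p q Hx Hp (HE q qE)))).
move: h; rewrite /comp. move=> h; exact: h.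
Qed.
Lemma ln_relval (pi : vec -> vec) (mu : nat -> vec) t :
  (forall s, 0 < dot_ratio (pi (mu s)) (mu s) (mu s.+1)) ->
  0 < relval pi mu t /\ ln (relval pi mu t) = \sum_(s < t) ell pi (mu s) (mu s.+1).
Proof.
move=> H; elim: t => [|t [IH1 IH2]] /=; first by rewrite ln1 big_ord0.
split; first by rewrite mulr_gt0.
by rewrite lnM ?posrE // IH2 big_ord_recr.
Qed.
End H.

Theorem lemma3p2 (R : realType) (n : nat) (E : seq 'rV[R]_n)
  (mu : nat -> 'rV[R]_n) (P : 'rV[R]_n -> 'rV[R]_n -> R) :
  (2 <= n)%N ->
  uniq E ->
  (forall p, p \in E -> open_simplex p) ->
  (forall t, mu t \in E) ->
  (* P is a probability measure on E x E *)
  (forall p q, p \in E -> q \in E -> 0 <= P p q) ->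
  disc_int E P (fun _ _ => 1) = 1 ->
  (* weak convergence of P_t to P (every function on the finite discrete
     space E x E is bounded continuous) *)
  (forall f : 'rV[R]_n -> 'rV[R]_n -> R,
      (fun t => emp_int mu t f) @ \oo --> disc_int E P f) ->
  (* Theta = portfolio maps E -> closed simplex *)
  (forall pi : 'rV[R]_n -> 'rV[R]_n,
      (forall p, p \in E -> closed_simplex (pi p)) ->
      (fun t : nat => t%:R^-1 * ln (relval pi mu t)) @ \oo --> disc_int E P (ell pi)
      /\ growth pi mu = disc_int E P (ell pi))
  /\ (exists pis : 'rV[R]_n -> 'rV[R]_n,
        (forall p, p \in E -> closed_simplex (pis p)) /\
        (forall pi : 'rV[R]_n -> 'rV[R]_n,
            (forall p, p \in E -> closed_simplex (pi p)) ->
            growth pi mu <= growth pis mu))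
  /\ (forall pis : 'rV[R]_n -> 'rV[R]_n,
        (forall p, p \in E -> closed_simplex (pis p)) ->
        (forall pi : 'rV[R]_n -> 'rV[R]_n,
            (forall p, p \in E -> closed_simplex (pi p)) ->
            growth pi mu <= growth pis mu) ->
        forall p, p \in E -> 0 < marg1 E P p ->
          closed_simplex (pis p) /\
          forall x : 'rV[R]_n, closed_simplex x ->
            \sum_(q <- E) cond2 E P q p * ln (dot_ratio x p q)
            <= \sum_(q <- E) cond2 E P q p * ln (dot_ratio (pis p) p q)).
Proof.
move=> n2 uE HE Hmu HP HP1 Hconv.
have part1 : forall pi : 'rV[R]_n -> 'rV[R]_n,
      (forall p, p \in E -> closed_simplex (pi p)) ->
      (fun t : nat => t%:R^-1 * ln (relval pi mu t)) @ \oo --> disc_int E P (ell pi)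
      /\ growth pi mu = disc_int E P (ell pi).
  move=> pi Hpi.
  have eqf : (fun t : nat => t%:R^-1 * ln (relval pi mu t)) = (fun t => emp_int mu t (ell pi)).
    apply/funext => t; rewrite /emp_int.
    have Hd : forall s, 0 < dot_ratio (pi (mu s)) (mu s) (mu s.+1).
      move=> s; exact: dot_ratio_gt0 (Hpi _ (Hmu s)) (HE _ (Hmu s)) (HE _ (Hmu s.+1)).
    by have [_ ->] := @ln_relval R n pi mu t Hd.
  rewrite eqf; have h := Hconv (ell pi); split => //.
  by rewrite /growth eqf; apply: cvg_lim.
pose F p x := \sum_(q <- E) P p q * ln (dot_ratio x p q).
have growthE : forall pi : 'rV[R]_n -> 'rV[R]_n,
    (forall p, p \in E -> closed_simplex (pi p)) ->
    growth pi mu = \sum_(p <- E) F p (pi p).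
  by move=> pi Hpi; rewrite (part1 pi Hpi).2.
split => //; split.
  pose x0 : 'rV[R]_n := const_mx (n%:R^-1).
  have x0S : closed_simplex x0.
    split; first by move=> i; rewrite mxE invr_ge0 ler0n.
    under eq_bigr do rewrite mxE.
    rewrite sumr_const card_ord -[_ *+ n]mulr_natr mulVf // pnatr_eq0 -lt0n.
    exact: leq_trans n2.
  have ex : forall p, exists x, closed_simplex x /\
      (p \in E -> forall y, closed_simplex y -> F p y <= F p x).
    move=> p; case: (boolP (p \in E)) => pE; last by exists x0.
    have Fc : {within closed_simplex (R:=R) (n:=n), continuous (F p)}.
      apply: continuous_in_subspaceT => x xA.
      apply: (@F_cont R n E P p x (HE p pE) HE).
      by move: xA; rewrite in_setE.
    have [c cA cmax] := @EVT_max_rV R n (F p) (closed_simplex (R:=R) (n:=n))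
      (ex_intro _ x0 x0S) (closed_simplex_compact R n) Fc.
    exists c; split; first by move: cA; rewrite in_setE.
    by move=> _ y Hy; apply: cmax; rewrite in_setE.
  pose pis p := proj1_sig (cid (ex p)).
  have pisS : forall p, closed_simplex (pis p) by move=> p; exact: (proj2_sig (cid (ex p))).1.
  have pisM : forall p, p \in E -> forall y, closed_simplex y -> F p y <= F p (pis p).
    by move=> p; exact: (proj2_sig (cid (ex p))).2.
  exists pis; split; first by move=> p _.
  move=> pi Hpi; rewrite growthE // growthE //.
  rewrite big_seq [leRHS]big_seq; apply: ler_sum => p pE.
  exact: pisM pE _ (Hpi p pE).
move=> pis pisS pisM p pE mpos; split; first exact: pisS.
move=> x xS.
pose pi q := if q == p then x else pis q.
have piS : forall q, q \in E -> closed_simplex (pi q).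
  by move=> q qE; rewrite /pi; case: ifP => // _; exact: pisS.
have := pisM pi piS; rewrite growthE // growthE //.
rewrite (bigD1_seq p) //= [leRHS](bigD1_seq p) //= {1}/pi eqxx.
have -> : \big[+%R/0]_(i <- E | i != p) F i (pi i) = \big[+%R/0]_(i <- E | i != p) F i (pis i).
  by apply: eq_bigr => i /negbTE ip; rewrite /pi ip.
rewrite lerD2r => H.
have cE : forall y, \sum_(q <- E) cond2 E P q p * ln (dot_ratio y p q) = (marg1 E P p)^-1 * F p y.
  move=> y; rewrite /F mulr_sumr; apply: eq_bigr => q _.
  by rewrite /cond2 mulrAC mulrC mulrA.
rewrite !cE; apply: ler_wpM2l => //; by rewrite invr_ge0 ltW.
Qed.
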